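(* For integers $n\geq 3$, $p\geq 2$ and $m \geq 1$, $\chi_\rho(FSSD_m(K_n\star P_p)) = n+3$.
   Context: All graphs are finite and simple. For a positive integer $i$, an $i$-packing in a graph is a set of vertices any two distinct members of which are at distance greater than $i$. The packing chromatic number $\chi_\rho(H)$ is the smallest $k$ such that $V(H)$ can be partitioned into sets $V_1,\dots,V_k$ with each $V_i$ an $i$-packing. For a positive integer $m$, $FSSD_m(G)$ is obtained from $G$ by replacing each edge $xy$ by a copy of $K_{2,m}$: the edge $xy$ is deleted and $m$ new vertices are added, each adjacent to exactly $x$ and $y$. The neighborhood corona $G\star H$ of graphs $G$ (with vertices $w_1,\dots,w_{n}$) and $H$ consists of one copy of $G$ and $n$ copies $H_1,\dots,H_n$ of $H$ (each retaining the edges of $H$), where every vertex of $H_i$ is additionally joined to every neighbor of $w_i$ in $G$. $K_n$ is the complete graph and $P_p$ the path on $p$ vertices. *)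

(* Defs.v *)
From mathcomp Require Import all_boot.
Set Implicit Arguments. Unset Strict Implicit. Unset Printing Implicit Defensive.

Definition simple_graph (T : finType) (e : rel T) : Prop :=
  symmetric e /\ irreflexive e.

Definition dist_le (T : finType) (e : rel T) (i : nat) (x y : T) : Prop :=
  exists s : seq T, [/\ size s <= i, path e x s & last x s = y].

Definition is_packing (T : finType) (e : rel T) (i : nat) (S : {set T}) : Prop :=
  forall x y, x \in S -> y \in S -> x != y -> ~ dist_le e i x y.

(* A packing k-colouring: colour j : 'I_k stands for colour j+1,
   and the class of colour j+1 must be a (j+1)-packing. *)
Definition packing_coloring (T : finType) (e : rel T) (k : nat) (c : T -> 'I_k) : Prop :=
  forall j : 'I_k, is_packing e j.+1 [set x | c x == j].

Definition packing_colorable (T : finType) (e : rel T) (k : nat) : Prop :=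
  exists c : T -> 'I_k, packing_coloring e c.

Definition packing_chromatic_number_is (T : finType) (e : rel T) (k : nat) : Prop :=
  packing_colorable e k /\ forall k', packing_colorable e k' -> k <= k'.

Definition K_rel (n : nat) : rel 'I_n := fun x y => x != y.
Definition P_rel (p : nat) : rel 'I_p :=
  fun x y => (x.+1 == y :> nat) || (y.+1 == x :> nat).

(* Neighborhood corona G * H : vertices inl w (copy of G) and inr (i,u)
   (vertex u of the copy H_i); H_i-vertices are joined to N_G(w_i). *)
Definition ncorona_rel (T U : finType) (e : rel T) (f : rel U) : rel (T + (T * U)) :=
  fun a b =>
    match a, b with
    | inl x, inl y => e x y
    | inr (i, u), inr (j, v) => (i == j) && f u v
    | inl x, inr (i, _) => e i x
    | inr (i, _), inl x => e i x
    end.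

(* FSSD_m(G): each edge {x,y} (recorded once as (x,y) with rank x < rank y)
   is replaced by m new vertices adjacent to exactly x and y. *)
Definition fssd_new (T : finType) (e : rel T) (m : nat) :=
  {t : T * T * 'I_m | e t.1.1 t.1.2 && (enum_rank t.1.1 < enum_rank t.1.2)}.

Definition fssd_rel (T : finType) (e : rel T) (m : nat) : rel (T + fssd_new e m) :=
  fun a b =>
    match a, b with
    | inl x, inr t => (x == (val t).1.1) || (x == (val t).1.2)
    | inr t, inl x => (x == (val t).1.1) || (x == (val t).1.2)
    | _, _ => false
    end.

Arguments fssd_rel {T} e m.
Arguments ncorona_rel {T U} e f.
Arguments K_rel : clear implicits.
Arguments P_rel : clear implicits.

(* Main.v *)
Require Import Defs.
From mathcomp Require Import all_boot zify.
Set Implicit Arguments. Unset Strict Implicit. Unset Printing Implicit Defensive.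

Lemma dcat (T : finType) (e : rel T) d1 d2 x y z :
  dist_le e d1 x y -> dist_le e d2 y z -> dist_le e (d1 + d2) x z.
Proof.
move=> [s1 [h1 p1 l1]] [s2 [h2 p2 l2]]; exists (s1 ++ s2); split.
- by rewrite size_cat leq_add.
- by rewrite cat_path p1 l1 p2.
- by rewrite last_cat l1.
Qed.

Lemma dmono (T : finType) (e : rel T) d1 d2 x y :
  d1 <= d2 -> dist_le e d1 x y -> dist_le e d2 x y.
Proof. by move=> h [s [h1 p1 l1]]; exists s; split => //; apply: leq_trans h. Qed.

Lemma dstep (T : finType) (e : rel T) x y : e x y -> dist_le e 1 x y.
Proof. by move=> h; exists [:: y]; rewrite /= h. Qed.

Lemma pk (T : finType) (e : rel T) k (c : T -> 'I_k) d x y :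
  packing_coloring e c -> dist_le e d x y -> d <= (c x).+1 -> x != y ->
  nat_of_ord (c x) != c y.
Proof.
move=> hc hd hle hxy; apply/negP => /eqP heq.
have : c x = c y by apply: val_inj.
move=> {}heq.
apply: (hc (c x) x y) => //; first by rewrite inE.
  by rewrite inE heq.
exact: dmono hd.
Qed.

Lemma php n (f : 'I_n -> nat) (ex : seq nat) lo hi :
  (forall l l', l != l' -> f l != f l') -> uniq ex ->
  (forall l, f l \notin ex) -> (forall l, lo <= f l < hi) ->
  (forall x, x \in ex -> lo <= x < hi) -> n + size ex <= hi - lo.
Proof.
move=> finj uex fex fr exr.
have inj : injective f.
  move=> a b hab; apply/eqP; apply/negPn/negP => /finj; by rewrite hab eqxx.
set s := map f (enum 'I_n) ++ ex.
have us : uniq s.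
  rewrite cat_uniq map_inj_uniq // enum_uniq uex /= andbT.
  apply/hasPn => x hx; apply/mapP => [[l _ hl]]; move: (fex l); rewrite -hl hx //.
have := uniq_leq_size us (s2 := iota lo (hi - lo)).
rewrite size_cat size_map size_enum_ord size_iota; apply => x.
rewrite mem_cat mem_iota => /orP [/mapP [l _ ->]|/exr]; [move: (fr l)|];
  case/andP => h1 h2; apply/andP; split=> //; lia.
Qed.

Section S.
Variables n p m : nat.
Hypotheses (hn : 3 <= n) (hp : 2 <= p) (hm : 1 <= m).

Local Notation T0 := ('I_n + 'I_n * 'I_p)%type.
Local Notation e0 := (ncorona_rel (K_rel n) (P_rel p)).
Local Notation NV := (fssd_new e0 m).
Local Notation V := (T0 + NV)%type.
Local Notation E := (fssd_rel e0 m).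

Lemma e0_sym : symmetric e0.
Proof.
case=> [x|[i u]] [y|[j v]] //=; rewrite /K_rel /P_rel ?(eq_sym x) ?(eq_sym i) //.
by rewrite orbC.
Qed.

Lemma e0_irr : irreflexive e0.
Proof. by case=> [x|[i u]] /=; rewrite /K_rel /P_rel ?eqxx //= orbb; case: eqP; lia. Qed.

Definition idx (x : T0) : 'I_n := match x with inl i => i | inr (i, _) => i end.

Lemma e0_wl l x : e0 (inl l) x = (l != idx x).
Proof. by case: x => [y|[i u]] //=; rewrite /K_rel eq_sym. Qed.

Lemma e0_wr l x : e0 x (inl l) = (l != idx x).
Proof. by rewrite e0_sym e0_wl. Qed.

Definition ends (t : NV) (a b : T0) := ((val t).1 == (a, b)) || ((val t).1 == (b, a)).

Lemma ends_adj t a b : ends t a b ->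
  [/\ E (inl a) (inr t), E (inr t) (inl a), E (inl b) (inr t) & E (inr t) (inl b)].
Proof.
rewrite /ends /=; case: (val t) => [[x y] r] /=.
by case/orP => /eqP [-> ->]; rewrite !eqxx ?orbT.
Qed.

Lemma ends_end t a b c d : ends t a b -> ends t c d -> (a == c) || (a == d).
Proof.
rewrite /ends; case: (val t) => [[x y] r] /=.
by case/orP => /eqP [? ?]; subst => /orP [] /eqP [? ?]; subst; rewrite eqxx ?orbT.
Qed.

Lemma ends_sym t a b : ends t a b -> ends t b a.
Proof. by rewrite /ends orbC. Qed.

Lemma exN a b (r : 'I_m) : e0 a b -> exists t : NV, ends t a b && ((val t).2 == r).
Proof.
move=> hab.
have hne : enum_rank a != enum_rank b.
  apply/negP => /eqP /enum_rank_inj hq; move: hab; rewrite hq e0_irr //.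
case: (ltngtP (enum_rank a) (enum_rank b)) => h.
- have P : e0 (a, b, r).1.1 (a, b, r).1.2 &&
      (enum_rank (a, b, r).1.1 < enum_rank (a, b, r).1.2) by rewrite /= hab h.
  by exists (Sub (a, b, r) P : NV); rewrite /ends SubK /= !eqxx.
- have P : e0 (b, a, r).1.1 (b, a, r).1.2 &&
      (enum_rank (b, a, r).1.1 < enum_rank (b, a, r).1.2) by rewrite /= e0_sym hab h.
  by exists (Sub (b, a, r) P : NV); rewrite /ends SubK /= !eqxx orbT.
- by move: hne; rewrite (val_inj h) eqxx.
Qed.

Definition Nv (a b : T0) (r : 'I_m) : V :=
  if [pick t : NV | ends t a b && ((val t).2 == r)] is Some t then inr t else inl a.

Lemma NvP a b r : e0 a b -> exists t, [/\ Nv a b r = inr t, ends t a b & (val t).2 = r].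
Proof.
rewrite /Nv; case: pickP => [t /andP [h1 /eqP h2]|h0] he; first by exists t.
by have [t ht] := exN r he; move: (h0 t); rewrite ht.
Qed.

Lemma dN a b r : e0 a b ->
  [/\ dist_le E 1 (inl a) (Nv a b r), dist_le E 1 (Nv a b r) (inl a),
      dist_le E 1 (inl b) (Nv a b r) & dist_le E 1 (Nv a b r) (inl b)].
Proof.
move=> he; have [t [-> ht _]] := NvP r he.
by case: (ends_adj ht) => h1 h2 h3 h4; split; apply: dstep.
Qed.

Lemma Nv_inl a b r x : e0 a b -> Nv a b r != inl x.
Proof. by move=> he; have [t [-> _ _]] := NvP r he. Qed.

Lemma Nv_neq a b c d r r' : e0 a b -> e0 c d -> a != c -> a != d ->
  Nv a b r != Nv c d r'.
Proof.
move=> h1 h2 hac had.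
have [t [-> ht _]] := NvP r h1; have [t' [-> ht' _]] := NvP r' h2.
apply/negP => /eqP [] htt; move: ht'; rewrite -htt => ht'.
by move: (ends_end ht ht'); rewrite (negbTE hac) (negbTE had).
Qed.

Lemma Nv_neq' a b c d r r' : e0 a b -> e0 c d -> b != c -> b != d ->
  Nv a b r != Nv c d r'.
Proof.
move=> h1 h2 hac had.
have [t [-> ht _]] := NvP r h1; have [t' [-> ht' _]] := NvP r' h2.
apply/negP => /eqP [] htt; move: ht'; rewrite -htt => ht'.
by move: (ends_end (ends_sym ht) ht'); rewrite (negbTE hac) (negbTE had).
Qed.

Lemma Nv_neqr a b r r' : e0 a b -> r != r' -> Nv a b r != Nv a b r'.
Proof.
move=> h1 hr.
have [t [-> _ e1]] := NvP r h1; have [t' [-> _ e2]] := NvP r' h1.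
by apply/negP => /eqP [] htt; move: hr; rewrite -e1 -e2 htt eqxx.
Qed.



Lemma ends_e0 (t : NV) : e0 (val t).1.1 (val t).1.2.
Proof. by case/andP: (valP t). Qed.

Lemma walk_orig a b s : path E (inl a) s -> last (inl a) s = inl b -> size s <= 3 ->
  a = b \/ e0 a b.
Proof.
case: s => [|z1 [|z2 [|z3 [|z4 s']]]] //=.
- by move=> _ [->]; left.
- by move=> /andP [h _] hl; move: h; rewrite hl.
- move=> /andP [h1 /andP [h2 _]] hl _; move: h2; rewrite hl.
  case: z1 h1 => [x|t] //=.
  move=> /orP [] /eqP -> /orP [] /eqP ->; try by left.
    by right; apply: ends_e0.
  by right; rewrite e0_sym; apply: ends_e0.
- move=> /andP [h1 /andP [h2 /andP [h3 _]]] hl _; move: h3; rewrite hl.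
  by case: z1 z2 h1 h2 => [x|t] [y|t'].
Qed.

Definition cv (x : V) : nat :=
  match x with inl (inl j) => j + 3 | inl (inr (i, u)) => (odd u).+1 | inr _ => 0 end.

Lemma cv_lt x : cv x < n + 3.
Proof. case: x => [[j|[i u]]|t] /=; try lia. by rewrite ltn_add2r. Qed.

Definition c0 (x : V) : 'I_(n + 3) := Ordinal (cv_lt x).

Lemma P_odd (u v : 'I_p) : P_rel p u v -> odd u != odd v.
Proof. by rewrite /P_rel => /orP [] /eqP <- /=; case: (odd _). Qed.

Lemma upper : packing_colorable E (n + 3).
Proof.
exists c0 => j x y; rewrite !inE => /eqP hx /eqP hy hxy [s [hs hpa hl]].
have hxy' : cv x = cv y by rewrite -[cv x]/(val (c0 x)) -[cv y]/(val (c0 y)) hx hy.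
have hj : nat_of_ord j = cv x by rewrite -hx.
move: hs; rewrite hj; clear hx hy.
case: x hxy hxy' hj hpa hl => [[j0|[i u]]|t]; case: y => [[j1|[i' u']]|t'] //=;
  rewrite ?addn3 //.
- by move=> hne [] /val_inj heq; rewrite heq eqxx in hne.
- by case: (odd u').
- by case: (odd u).
- move=> hne hodd _ hpa hl hs.
  have hs3 : size s <= 3 by apply: (leq_trans hs); case: (odd u).
  have [heq|he] := walk_orig hpa hl hs3.
  + by rewrite heq eqxx in hne.
  + move: he => /= /andP [_ /P_odd]; move: hodd; by case: (odd u); case: (odd u').
- move=> hne _ _; case: s => [|z [|z' s']] //=.
  + by move=> _ [] heq; rewrite heq eqxx in hne.
  + by move=> /andP [h _] hz; move: h; rewrite hz.
Qed.

Lemma ex_out (s : seq 'I_n) : size s < n -> exists l, l \notin s.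
Proof.
move=> hs; case: (pickP (fun l : 'I_n => l \notin s)) => [l hl|h]; first by exists l.
have : n <= size s.
  rewrite -{1}(size_enum_ord n); apply: uniq_leq_size (enum_uniq _) _ => x _.
  by move: (h x) => /= /negbFE.
lia.
Qed.

Lemma e0_hu (i : 'I_n) (u v : 'I_p) : P_rel p u v -> e0 (inr (i, u)) (inr (i, v)).
Proof. by move=> h /=; rewrite eqxx. Qed.

Local Notation W0 j := (@inl 'I_n ('I_n * 'I_p)%type j).
Local Notation H0 i u := (@inr 'I_n ('I_n * 'I_p)%type (i, u)).
Local Notation ww j := (@inl T0 NV (W0 j)).

Definition r0 : 'I_m := Ordinal hm.
Definition u0 : 'I_p := Ordinal (ltnW hp).
Definition u1 : 'I_p := Ordinal hp.
Lemma u10 : u1 != u0. Proof. by []. Qed.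
Lemma Hneq (i j : 'I_n) (u v : 'I_p) : u != v -> H0 i u != H0 j v.
Proof. move=> huv; apply/negP => /eqP h; move: huv; by case: h => _ ->; rewrite eqxx. Qed.
Lemma Hneqi (i j : 'I_n) (u v : 'I_p) : i != j -> H0 i u != H0 j v.
Proof. move=> huv; apply/negP => /eqP h; move: huv; by case: h => -> _; rewrite eqxx. Qed.
Lemma P01 : P_rel p u0 u1. Proof. by []. Qed.
Lemma P10 : P_rel p u1 u0. Proof. by rewrite /P_rel orbC. Qed.

Lemma e0_WH (l i : 'I_n) u : l != i -> e0 (W0 l) (H0 i u).
Proof. by move=> h; rewrite e0_wl. Qed.
Lemma e0_HW (l i : 'I_n) u : l != i -> e0 (H0 i u) (W0 l).
Proof. by move=> h; rewrite e0_wr. Qed.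
Lemma e0_WW (l i : 'I_n) : l != i -> e0 (W0 l) (W0 i).
Proof. by move=> h; rewrite e0_wl. Qed.

Lemma e0_neq a b : e0 a b -> a != b.
Proof. by apply: contraTN => /eqP ->; rewrite e0_irr. Qed.

Section Lower.
Variables (k : nat) (c : V -> 'I_k).
Hypotheses (hc : packing_coloring E c) (hk : k <= n + 2).
Local Notation col x := (nat_of_ord (c x)).

Lemma colk x : col x < k. Proof. exact: ltn_ord. Qed.

Lemma F_adj a b : e0 a b -> 0 < col (inl a) -> col (inl a) != col (inl b).
Proof.
move=> he h; have [_ _ _ h4] := dN r0 he; have [h1 _ _ _] := dN r0 he.
apply: (pk hc (dcat h1 h4)); first exact: h.
by apply/negP => /eqP [] /eqP; rewrite (negbTE (e0_neq he)).
Qed.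

Lemma common a b : exists l, e0 a (W0 l) && e0 (W0 l) b.
Proof.
have [l hl] := ex_out (s := [:: idx a; idx b]) hn.
by exists l; rewrite e0_wr e0_wl; move: hl; rewrite !inE negb_or.
Qed.

Lemma F_far a b : a != b -> 3 <= col (inl a) -> col (inl a) != col (inl b).
Proof.
move=> hab h; have [l /andP [h1 h2]] := common a b.
have [d1 _ _ d2] := dN r0 h1; have [d3 _ _ d4] := dN r0 h2.
by apply: (pk hc (dcat (dcat d1 d2) (dcat d3 d4))).
Qed.

Lemma Z1 a x r : col (inl a) = 0 -> e0 a x -> col (Nv a x r) != 0.
Proof.
move=> h0 he; have [_ d _ _] := dN r he; rewrite -h0.
by apply: (pk hc d) => //; apply: Nv_inl.
Qed.

Lemma Z2 a x y r r' : col (inl a) = 0 -> e0 a x -> e0 a y -> Nv a x r != Nv a y r' ->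
  col (Nv a x r) != col (Nv a y r').
Proof.
move=> h0 hx hy hne; have [_ d1 _ _] := dN r hx; have [d2 _ _ _] := dN r' hy.
apply: (pk hc (dcat d1 d2)) => //; have := Z1 r h0 hx; lia.
Qed.

Lemma Zd a x y r r' : col (inl a) = 0 -> e0 a x -> e0 a y -> x != y ->
  col (Nv a x r) != col (Nv a y r').
Proof.
move=> h0 hx hy hne; apply: Z2 => //; apply: Nv_neq' => //.
by rewrite eq_sym e0_neq.
Qed.

Lemma W1 i : col (ww i) != 0.
Proof.
apply/negP => /eqP h0.
have [j0 hj0] := ex_out (s := [:: i]) (ltnW hn).
have [j1 hj1] := ex_out (s := [:: i; j0]) hn.
move: hj0 hj1; rewrite !inE negb_or => hj0 /andP [hj1 hj10].
pose g l := if l == i then H0 j0 u0 else W0 l.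
have hg l : e0 (W0 i) (g l).
  by rewrite /g; case: eqP => [_|/eqP h]; rewrite e0_wl //= eq_sym.
have ha : e0 (W0 i) (H0 j0 u1) by rewrite e0_wl /= eq_sym.
have hb : e0 (W0 i) (H0 j1 u0) by rewrite e0_wl /= eq_sym.
have hZ x : e0 (W0 i) x -> 1 <= col (Nv (W0 i) x r0) < k.
  by move=> hx; rewrite colk andbT lt0n; apply: Z1.
suff : n + 2 <= k - 1 by move: hk; lia.
apply: (php (f := fun l => col (Nv (W0 i) (g l) r0))
  (ex := [:: col (Nv (W0 i) (H0 j0 u1) r0); col (Nv (W0 i) (H0 j1 u0) r0)])).
- move=> l l' hll'; apply: Zd => //; rewrite /g.
  case: ifP => /eqP hl; case: ifP => /eqP hl' //.
  by move: hll'; rewrite hl hl' eqxx.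
- rewrite /= inE andbT; apply: Zd => //; exact: Hneq.
- move=> l; rewrite !inE negb_or; apply/andP; split; apply: Zd => //; rewrite /g.
  + by case: ifP => _ //; apply: Hneq; rewrite eq_sym u10.
  + by case: ifP => _ //; apply: Hneqi; rewrite eq_sym.
- by move=> l; apply: hZ.
- by move=> x; rewrite !inE => /orP [] /eqP ->; apply: hZ.
Qed.


Lemma Wd l l' : l != l' -> col (ww l) != col (ww l').
Proof. by move=> h; apply: F_adj; [exact: e0_WW | rewrite lt0n W1]. Qed.

Lemma LW (ex : seq nat) lo hi : uniq ex -> (forall l, col (ww l) \notin ex) ->
  (forall l, lo <= col (ww l) < hi) -> (forall x, x \in ex -> lo <= x < hi) ->
  n + size ex <= hi - lo.
Proof. by move=> *; apply: (php (f := fun l => col (ww l))) => //; exact: Wd. Qed.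

Lemma Wr l : 1 <= col (ww l) < k.
Proof. by rewrite colk andbT lt0n W1. Qed.

Lemma Aex : exists a, col (ww a) < 3.
Proof.
case: (pickP (fun a => col (ww a) < 3)) => [a h|h]; first by exists a.
have H l : 3 <= col (ww l) < k by rewrite colk andbT leqNgt h.
have : n + size (@nil nat) <= k - 3 by apply: (LW (ex := @nil nat)) => //.
by move: hk hn; rewrite /=; lia.
Qed.

Lemma two y1 y2 : y1 != y2 -> 1 <= y1 < k -> 1 <= y2 < k ->
  (forall l, y1 != col (ww l)) -> (forall l, y2 != col (ww l)) -> False.
Proof.
move=> h12 r1 r2 g1 g2.
have := LW (ex := [:: y1; y2]) (lo := 1) (hi := k).
rewrite /= inE h12 => /(_ isT).
have H l : col (ww l) \notin [:: y1; y2].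
  by rewrite !inE negb_or !(eq_sym (col _)) g1 g2.
move=> /(_ H Wr) => H2; have : n + 2 <= k - 1.
  by apply: H2 => x; rewrite !inE => /orP [] /eqP ->.
by move: hk; lia.
Qed.

Lemma Bt i q l r : col (inl (H0 i q)) = 0 -> l != i ->
  col (Nv (H0 i q) (W0 l) r) != 0 /\
  (2 <= col (Nv (H0 i q) (W0 l) r) -> forall l', col (Nv (H0 i q) (W0 l) r) != col (ww l')).
Proof.
move=> h0 hl; have he := e0_HW q hl.
split; first exact: Z1.
move=> h2 l'; have [_ _ _ d1] := dN r he.
case: (eqVneq l' l) => [->|hl'].
- by apply: (pk hc d1) => //; apply: Nv_inl.
- have he2 : e0 (W0 l) (W0 l') by apply: e0_WW; rewrite eq_sym.
  have [d2 _ _ d3] := dN r0 he2.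
  by apply: (pk hc (dcat d1 (dcat d2 d3))) => //; apply: Nv_inl.
Qed.

Lemma three x1 x2 x3 : x1 != x2 -> x1 != x3 -> x2 != x3 ->
  0 < x1 < k -> 0 < x2 < k -> 0 < x3 < k ->
  (2 <= x1 -> forall l, x1 != col (ww l)) ->
  (2 <= x2 -> forall l, x2 != col (ww l)) ->
  (2 <= x3 -> forall l, x3 != col (ww l)) -> False.
Proof.
move=> h12 h13 h23 r1 r2 r3 g1 g2 g3.
case: (eqVneq x1 1) => e1.
  subst x1; apply: (two h23) => //; [apply: g2|apply: g3]; move: r2 r3 h12 h13; lia.
case: (eqVneq x2 1) => e2.
  subst x2; apply: (two h13) => //; [apply: g1|apply: g3]; move: r1 r3 e1 h23; lia.
apply: (two h12) => //; [apply: g1|apply: g2]; move: r1 r2 e1 e2; lia.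
Qed.

Lemma Bnm i q : col (inl (H0 i q)) = 0 -> n <= 3 /\ m <= 1.
Proof.
move=> h0.
have Z1' l r : l != i -> 0 < col (Nv (H0 i q) (W0 l) r) < k.
  by move=> hl; rewrite colk andbT lt0n; case: (Bt r h0 hl).
have G l r (hl : l != i) := (Bt r h0 hl).2.
have [l1 hl1] := ex_out (s := [:: i]) (ltnW hn).
have [l2 hl2] := ex_out (s := [:: i; l1]) hn.
move: hl1 hl2; rewrite !inE !negb_or => hl1 /andP [hl2 hl21].
case: (leqP n 3) => hn3; [case: (leqP m 1) => hm1; [by split | exfalso] | exfalso].
- pose r1 : 'I_m := Ordinal hm1.
  have e1 := e0_HW q hl1; have e2 := e0_HW q hl2.
  apply: (three (x1 := col (Nv (H0 i q) (W0 l1) r0)) (x2 := col (Nv (H0 i q) (W0 l1) r1))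
                (x3 := col (Nv (H0 i q) (W0 l2) r0))); try (by apply: Z1'); try (by apply: G).
  + by apply: Z2 => //; apply: Nv_neqr.
  + by apply: Zd => //; rewrite eq_sym.
  + by apply: Zd => //; rewrite eq_sym.
- have [l3 hl3] := ex_out (s := [:: i; l1; l2]) hn3.
  move: hl3; rewrite !inE !negb_or => /andP [hl3 /andP [hl31 hl32]].
  have e1 := e0_HW q hl1; have e2 := e0_HW q hl2; have e3 := e0_HW q hl3.
  apply: (three (x1 := col (Nv (H0 i q) (W0 l1) r0)) (x2 := col (Nv (H0 i q) (W0 l2) r0))
                (x3 := col (Nv (H0 i q) (W0 l3) r0))); try (by apply: Z1'); try (by apply: G);
  by apply: Zd => //; rewrite eq_sym.
Qed.


Lemma B1 i q : col (inl (H0 i q)) = 0 -> exists a, col (ww a) = 1.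
Proof.
move=> h0; have [hn3 hm1] := Bnm h0.
have [l1 hl1] := ex_out (s := [:: i]) (ltnW hn).
have [l2 hl2] := ex_out (s := [:: i; l1]) hn.
move: hl1 hl2; rewrite !inE !negb_or => hl1 /andP [hl2 hl21].
have e1 := e0_HW q hl1; have e2 := e0_HW q hl2.
have d12 : col (Nv (H0 i q) (W0 l1) r0) != col (Nv (H0 i q) (W0 l2) r0).
  by apply: Zd => //; rewrite eq_sym.
have key y : 2 <= y -> y < k -> (forall l, y != col (ww l)) -> exists a, col (ww a) = 1.
  move=> hy2 hyk hg.
  case: (pickP (fun a => col (ww a) == 1)) => [a /eqP|h]; first by exists a.
  exfalso.
  have : n + size [:: y] <= k - 2.
    apply: LW => //.
    - by move=> l; rewrite inE eq_sym hg.
    - move=> l; move: (h l) (W1 l) (colk (ww l)) => /= /negbT; lia.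
    - by move=> x; rewrite inE => /eqP ->; rewrite hy2 hyk.
  by move: hk hn3; rewrite /=; lia.
have [z1 g1] := Bt r0 h0 hl1; have [z2 g2] := Bt r0 h0 hl2.
case: (eqVneq (col (Nv (H0 i q) (W0 l1) r0)) 1) => e1'.
- have y2 : 2 <= col (Nv (H0 i q) (W0 l2) r0) by move: z2 d12; rewrite e1'; lia.
  exact: (key _ y2 (colk _) (g2 y2)).
- have y1 : 2 <= col (Nv (H0 i q) (W0 l1) r0) by move: z1 e1'; lia.
  exact: (key _ y1 (colk _) (g1 y1)).
Qed.

Lemma Bw i q v : col (inl (H0 i q)) = 0 -> P_rel p q v -> 2 <= col (ww i) <= 3.
Proof.
move=> h0 hv; have [hn3 hm1] := Bnm h0.
have [l1 hl1] := ex_out (s := [:: i]) (ltnW hn).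
have [l2 hl2] := ex_out (s := [:: i; l1]) hn.
move: hl1 hl2; rewrite !inE !negb_or => hl1 /andP [hl2 hl21].
have e1 := e0_HW q hl1; have e2 := e0_HW q hl2.
have es : e0 (H0 i q) (H0 i v) := e0_hu i hv.
have d12 : col (Nv (H0 i q) (W0 l1) r0) != col (Nv (H0 i q) (W0 l2) r0).
  by apply: Zd => //; rewrite eq_sym.
have s0 : col (Nv (H0 i q) (H0 i v) r0) != 0 := Z1 r0 h0 es.
have s1 : col (Nv (H0 i q) (H0 i v) r0) != col (Nv (H0 i q) (W0 l1) r0) by apply: Zd.
have s2 : col (Nv (H0 i q) (H0 i v) r0) != col (Nv (H0 i q) (W0 l2) r0) by apply: Zd.
have [d1 _ _ _] := dN r0 es.
have [_ d1' _ _] := dN r0 es.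
have sW : 2 <= col (Nv (H0 i q) (H0 i v) r0) -> forall l, l != i ->
    col (Nv (H0 i q) (H0 i v) r0) != col (ww l).
  move=> h2 l hl; have el := e0_HW q hl; have [d2 _ _ d3] := dN r0 el.
  by apply: (pk hc (dcat d1' (dcat d2 d3))) => //; apply: Nv_inl.
have key y : 2 <= y -> y < k -> (forall l, y != col (ww l)) ->
    y != col (Nv (H0 i q) (H0 i v) r0) -> col (Nv (H0 i q) (H0 i v) r0) != 1 ->
    2 <= col (ww i) <= 3.
  move=> hy2 hyk hg hys hs1.
  have hs2 : 2 <= col (Nv (H0 i q) (H0 i v) r0) by move: s0 hs1; lia.
  case: (eqVneq (col (Nv (H0 i q) (H0 i v) r0)) (col (ww i))) => hsi.
  - rewrite -hsi hs2 /= leqNgt; apply/negP => h4.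
    have [d2 _ _ d3] := dN r0 e1; have [d4 _ _ d5] := dN r0 (e0_WW hl1).
    have := pk hc (dcat d1' (dcat (dcat d2 d3) (dcat d4 d5))) h4 (Nv_inl _ _ es).
    by rewrite hsi eqxx.
  - exfalso; apply: (two (y1 := y) (y2 := col (Nv (H0 i q) (H0 i v) r0))) => //.
    + by rewrite hyk; move: hy2; lia.
    + by rewrite colk; move: s0; lia.
    + move=> l; case: (eqVneq l i) => [->|hl] //; exact: sW.
have [z1 g1] := Bt r0 h0 hl1; have [z2 g2] := Bt r0 h0 hl2.
case: (eqVneq (col (Nv (H0 i q) (W0 l1) r0)) 1) => e1'.
- have y2 : 2 <= col (Nv (H0 i q) (W0 l2) r0) by move: z2 d12; rewrite e1'; lia.
  by apply: (key _ y2 (colk _) (g2 y2)); [rewrite eq_sym | rewrite -e1'].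
- case: (eqVneq (col (Nv (H0 i q) (W0 l2) r0)) 1) => e2'.
  + have y1 : 2 <= col (Nv (H0 i q) (W0 l1) r0) by move: z1 e1'; lia.
    by apply: (key _ y1 (colk _) (g1 y1)); [rewrite eq_sym | rewrite -e2'].
  + have y1 : 2 <= col (Nv (H0 i q) (W0 l1) r0) by move: z1 e1'; lia.
    have y2 : 2 <= col (Nv (H0 i q) (W0 l2) r0) by move: z2 e2'; lia.
    exfalso; apply: (two d12 _ _ (g1 y1) (g2 y2)).
    * by rewrite colk; move: z1; lia.
    * by rewrite colk; move: z2; lia.
Qed.


Ltac gen_cols := repeat match goal with |- context [nat_of_ord (c ?x)] =>
  let y := fresh "y" in set y := nat_of_ord (c x); clearbody y end.
Ltac mlia := gen_cols; lia.

Lemma caseA : (forall j, col (inl (H0 j u0)) != 0) -> (forall j, col (inl (H0 j u1)) != 0) -> False.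
Proof.
move=> hA0 hA1.
have [a ha] := Aex; have ha1 := W1 a.
have pa : 0 < col (ww a) by rewrite lt0n.
case: (pickP (fun b => col (ww b) == 3 - col (ww a))) => [b /eqP hb|hnb].
- have hab : a != b by apply/eqP => hab; move: hb; rewrite -hab; move: ha ha1; mlia.
  have [cc hcc] := ex_out (s := [:: a; b]) hn.
  move: hcc; rewrite !inE !negb_or => /andP [hac hbc]; rewrite eq_sym in hac; rewrite eq_sym in hbc.
  have pb : 0 < col (ww b) by rewrite lt0n W1.
  have hx qq : col (inl (H0 cc qq)) != 0 -> 3 <= col (inl (H0 cc qq)).
    move=> hq0.
    have fa := F_adj (e0_WH qq hac) pa; have fb := F_adj (e0_WH qq hbc) pb.
    move: hq0 fa fb hb ha pa; mlia.
  have h0 := hx u0 (hA0 cc); have h1 := hx u1 (hA1 cc).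
  apply: (two (y1 := col (inl (H0 cc u0))) (y2 := col (inl (H0 cc u1)))).
  + by apply: F_adj; [exact: e0_hu P01 | move: h0; mlia].
  + by rewrite colk; move: h0; mlia.
  + by rewrite colk; move: h1; mlia.
  + by move=> l; apply: F_far.
  + by move=> l; apply: F_far.
- have [j hj] := ex_out (s := [:: a]) (ltnW hn).
  move: hj; rewrite !inE eq_sym => haj.
  have nb l : col (ww l) != 3 - col (ww a) by move: (hnb l) => /negbT.
  have gen qq : col (inl (H0 j qq)) != 0 -> col (inl (H0 j qq)) != 3 - col (ww a) -> False.
    move=> hq0 hqb.
    have fa := F_adj (e0_WH qq haj) pa.
    have h3 : 3 <= col (inl (H0 j qq)) by move: hq0 hqb fa ha pa; mlia.
    apply: (two (y1 := col (inl (H0 j qq))) (y2 := 3 - col (ww a))) => //.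
    + by rewrite colk; move: h3; mlia.
    + by move: ha pa h3 (colk (inl (H0 j qq))); mlia.
    + by move=> l; apply: F_far.
    + by move=> l; rewrite eq_sym nb.
  case: (eqVneq (col (inl (H0 j u0))) (3 - col (ww a))) => e.
  + apply: (gen u1 (hA1 j)); rewrite -e eq_sym.
    by apply: F_adj; [exact: e0_hu P01 | rewrite lt0n hA0].
  + exact: gen u0 (hA0 j) e.
Qed.

Lemma caseB i q v : col (inl (H0 i q)) = 0 -> P_rel p q v -> False.
Proof.
move=> h0 hv.
have [hn3 hm1] := Bnm h0.
have [a ha] := B1 h0.
have hwi := Bw h0 hv.
have pa : 0 < col (ww a) by rewrite ha.
have tA j qq qq' : a != j -> col (inl (H0 j qq)) = 0 -> P_rel p qq qq' ->
    2 <= col (Nv (H0 j qq) (W0 a) r0) /\ forall l, col (Nv (H0 j qq) (W0 a) r0) != col (ww l).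
  move=> haj hz hP; have [z g] := Bt r0 hz haj.
  have he := e0_HW qq haj; have [_ _ d _] := dN r0 he.
  have hne : col (ww a) != col (Nv (H0 j qq) (W0 a) r0).
    by apply: (pk hc d) => //; rewrite eq_sym Nv_inl.
  have h2 : 2 <= col (Nv (H0 j qq) (W0 a) r0) by move: z hne ha; mlia.
  by split => //; apply: g.
case: (pickP (fun b => col (ww b) == 2)) => [b /eqP hb|hnb].
- have hab : a != b by apply/eqP => hab; move: hb; rewrite -hab ha.
  have [cc hcc] := ex_out (s := [:: a; b]) hn.
  move: hcc; rewrite !inE !negb_or => /andP [hac hbc]; rewrite eq_sym in hac; rewrite eq_sym in hbc.
  have pb : 0 < col (ww b) by rewrite hb.
  have hx12 qq : col (inl (H0 cc qq)) != 1 /\ col (inl (H0 cc qq)) != 2.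
    have fa := F_adj (e0_WH qq hac) pa; have fb := F_adj (e0_WH qq hbc) pb.
    by split; [move: fa ha | move: fb hb]; mlia.
  have hcc3 qq qq' : col (inl (H0 cc qq)) = 0 -> P_rel p qq qq' -> col (ww cc) = 3.
    move=> hz hP; have := Bw hz hP; have := Wd hbc; move: hb; mlia.
  have t4 qq qq' : col (inl (H0 cc qq)) = 0 -> P_rel p qq qq' ->
      col (Nv (H0 cc qq) (W0 a) r0) = 4.
    move=> hz hP; have [h2 g] := tA cc qq qq' hac hz hP.
    have := g a; have := g b; have := g cc; have := hcc3 qq qq' hz hP.
    have := colk (Nv (H0 cc qq) (W0 a) r0).
    move: h2 ha hb hk hn3; mlia.
  have fin qq qq' : P_rel p qq qq' -> P_rel p qq' qq -> col (inl (H0 cc qq)) = 0 -> False.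
    move=> hP hP' hz.
    have ht := t4 qq qq' hz hP; have hc3 := hcc3 qq qq' hz hP.
    have [y1 y2] := hx12 qq'.
    have y3 : col (ww cc) != col (inl (H0 cc qq')) by apply: F_far => //; rewrite hc3.
    have eq' : H0 cc qq != H0 cc qq' := e0_neq (e0_hu cc hP).
    have ea := e0_HW qq hac; have ea' := e0_HW qq' hac.
    case: (eqVneq (col (inl (H0 cc qq'))) 0) => hy0.
    + have ht' := t4 qq' qq hy0 hP'.
      have [_ _ _ d1] := dN r0 ea; have [_ _ d2 _] := dN r0 ea'.
      have := pk hc (dcat d1 d2) _ (Nv_neq r0 r0 ea ea' eq' isT).
      by rewrite ht ht' eqxx => /(_ isT).
    + have [_ d1 _ _] := dN r0 ea; have [d2 _ _ d3] := dN r0 (e0_hu cc hP).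
      have := pk hc (dcat d1 (dcat d2 d3)) _ (Nv_inl r0 _ ea).
      rewrite ht => /(_ isT) hne.
      have := colk (inl (H0 cc qq')).
      move: hne y1 y2 y3 hy0 hc3 hk hn3; mlia.
  case: (eqVneq (col (inl (H0 cc u0))) 0) => hx0; first exact: fin P01 P10 hx0.
  case: (eqVneq (col (inl (H0 cc u1))) 0) => hx1; first exact: fin P10 P01 hx1.
  have [a0 b0] := hx12 u0; have [a1 b1] := hx12 u1.
  have g0 : 3 <= col (inl (H0 cc u0)) by move: hx0 a0 b0; mlia.
  have g1 : 3 <= col (inl (H0 cc u1)) by move: hx1 a1 b1; mlia.
  apply: (two (y1 := col (inl (H0 cc u0))) (y2 := col (inl (H0 cc u1)))).
  + by apply: F_adj; [exact: e0_hu P01 | move: g0; mlia].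
  + by rewrite colk; move: g0; mlia.
  + by rewrite colk; move: g1; mlia.
  + by move=> l; apply: F_far.
  + by move=> l; apply: F_far.
- have nb l : col (ww l) != 2 by move: (hnb l) => /negbT.
  have hi3 : col (ww i) = 3 by move: hwi (nb i); mlia.
  have hai : a != i by apply/eqP => hai; move: ha; rewrite hai hi3.
  have [j hj] := ex_out (s := [:: a; i]) hn.
  move: hj; rewrite !inE !negb_or => /andP [haj hij]; rewrite eq_sym in haj; rewrite eq_sym in hij.
  have gen qq qq' : P_rel p qq qq' -> col (inl (H0 j qq)) = 2.
    move=> hP.
    have fa := F_adj (e0_WH qq haj) pa.
    case: (eqVneq (col (inl (H0 j qq))) 0) => hz.
      have := Bw hz hP; have := Wd hij; move: (nb j) hi3; mlia.
    case: (leqP 3 (col (inl (H0 j qq)))) => h3; last by move: fa ha hz h3; mlia.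
    exfalso; apply: (two (y1 := col (inl (H0 j qq))) (y2 := 2)).
    + by move: h3; mlia.
    + by rewrite colk; move: h3; mlia.
    + by move: h3 (colk (inl (H0 j qq))); mlia.
    + by move=> l; apply: F_far.
    + by move=> l; rewrite eq_sym nb.
  have := F_adj (e0_hu j P01); rewrite (gen _ _ P01) (gen _ _ P10) eqxx.
  by move=> /(_ isT).
Qed.

End Lower.

Lemma lower k (c : V -> 'I_k) : packing_coloring E c -> n + 3 <= k.
Proof.
move=> hc; rewrite leqNgt; apply/negP => hk'.
have hk : k <= n + 2 by move: hk'; lia.
case: (pickP (fun j => nat_of_ord (c (inl (H0 j u0))) == 0)) => [j /eqP h|h0].
  exact: caseB hc hk j u0 u1 h P01.
case: (pickP (fun j => nat_of_ord (c (inl (H0 j u1))) == 0)) => [j /eqP h|h1].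
  exact: caseB hc hk j u1 u0 h P10.
by apply: (caseA hc hk) => j; [move: (h0 j) | move: (h1 j)] => /negbT.
Qed.

End S.

Theorem theorem1 (n p m : nat) (hn : 3 <= n) (hp : 2 <= p) (hm : 1 <= m) :
  packing_chromatic_number_is
    (fssd_rel (ncorona_rel (K_rel n) (P_rel p)) m) (n + 3).
Proof.
split; first exact: upper.
by move=> k [c hc]; apply: (lower hn hp hm hc).
Qed.
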